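(* Let $\chi:T\to\overline{\mathbf F}_p^\times$ be a smooth character, viewed as a character of $P$, and let $\pi$ be a smooth representation of $G$. If $\mathrm{Hom}_P(\chi,\pi)\neq0$, then $\chi$ extends uniquely to a character of $G$, and (for this extension) $\mathrm{Hom}_P(\chi,\pi)=\mathrm{Hom}_G(\chi,\pi)$.
   Context: $F$ non-Archimedean local field of residual characteristic $p$, $G=\mathrm{GL}_2(F)$, $P$ the upper triangular Borel subgroup, $U$ its unipotent radical, $T$ the diagonal torus; characters of $T$ are viewed as characters of $P$ via $P\to P/U\cong T$. Representations are smooth on $\overline{\mathbf F}_p$-vector spaces. *)

(* Defs.v *)
From HB Require Import structures.
From mathcomp Require Import all_boot all_order all_algebra.
Set Implicit Arguments. Unset Strict Implicit. Unset Printing Implicit Defensive.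
Import Order.TTheory GRing.Theory Num.Theory.
Local Open Scope ring_scope.

(* v is only meaningful on nonzero elements; v 0 is irrelevant. *)

(* "x lies in the ideal ϖ^n O" *)
Definition vge (F : fieldType) (v : F -> int) (n : int) (x : F) : Prop :=
  x = 0 \/ n <= v x.

Record is_nonarch_local_field (F : fieldType) (p : nat) (v : F -> int) : Prop := {
  nalf_vmul : forall x y : F, x != 0 -> y != 0 -> v (x * y) = v x + v y;
  nalf_vadd : forall x y : F, x != 0 -> y != 0 -> x + y != 0 ->
                Num.min (v x) (v y) <= v (x + y);
  nalf_unif : exists w : F, w != 0 /\ v w = 1;
  nalf_complete : forall u : nat -> F,
      (forall n : nat, exists N : nat, forall i j : nat, (N <= i)%N -> (N <= j)%N ->
          vge v n%:Z (u i - u j)) ->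
      exists l : F, forall n : nat, exists N : nat, forall i : nat, (N <= i)%N ->
          vge v n%:Z (u i - l);
  nalf_residue_finite : exists s : seq F,
      forall x : F, vge v 0 x -> exists2 y, y \in s & vge v 0 y /\ vge v 1 (x - y);
  nalf_prime : prime p;
  nalf_residue_char : vge v 1 (p%:R : F)
}.

Definition is_Fpbar (C : closedFieldType) (p : nat) : Prop :=
  p \in [pchar C] /\ forall x : C, exists n : nat, (0 < n)%N /\ x ^+ (p ^ n) = x.

Definition inGL (F : fieldType) (g : 'M[F]_2) : Prop := g \in unitmx.

Definition inP (F : fieldType) (g : 'M[F]_2) : Prop :=
  g \in unitmx /\ g ord_max ord0 = 0.

Definition inT (F : fieldType) (g : 'M[F]_2) : Prop :=
  g \in unitmx /\ g ord_max ord0 = 0 /\ g ord0 ord_max = 0.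

(* principal congruence subgroup K_n = 1 + ϖ^n M_2(O)  (n >= 1); these form a
   basis of neighbourhoods of 1 consisting of open subgroups *)
Definition inK (F : fieldType) (v : F -> int) (n : nat) (g : 'M[F]_2) : Prop :=
  g \in unitmx /\ forall i j : 'I_2, vge v n%:Z (g i j - (1%:M : 'M[F]_2) i j).

Definition is_rep (F : fieldType) (C : fieldType) (V : lmodType C)
    (pi : 'M[F]_2 -> V -> V) : Prop :=
  (forall g, inGL g -> forall (a : C) (x y : V), pi g (a *: x + y) = a *: pi g x + pi g y) /\
  (forall x, pi 1%:M x = x) /\
  (forall g h, inGL g -> inGL h -> forall x, pi (g *m h) x = pi g (pi h x)).

Definition is_smooth_rep (F : fieldType) (v : F -> int) (C : fieldType) (V : lmodType C)
    (pi : 'M[F]_2 -> V -> V) : Prop :=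
  is_rep pi /\ forall x : V, exists n : nat, forall g, inK v n.+1 g -> pi g x = x.

(* smooth character of T (a function on matrices, only its values on T matter) *)
Definition is_smooth_char_T (F : fieldType) (v : F -> int) (C : fieldType)
    (chi : 'M[F]_2 -> C) : Prop :=
  (forall t, inT t -> chi t != 0) /\
  (forall t t', inT t -> inT t' -> chi (t *m t') = chi t * chi t') /\
  (exists n : nat, forall t, inT t -> inK v n.+1 t -> chi t = 1).

(* a character of T viewed as a character of P via P -> P/U = T *)
Definition charP (F : fieldType) (C : fieldType) (chi : 'M[F]_2 -> C) (b : 'M[F]_2) : C :=
  chi (diag_mx (\row_i b i i)).

Definition is_smooth_char_G (F : fieldType) (v : F -> int) (C : fieldType)
    (psi : 'M[F]_2 -> C) : Prop :=
  (forall g, inGL g -> psi g != 0) /\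
  (forall g h, inGL g -> inGL h -> psi (g *m h) = psi g * psi h) /\
  (exists n : nat, forall g, inK v n.+1 g -> psi g = 1).

(* C-linear maps f : chi -> pi (the space of chi is C itself) *)
Definition is_Clinear (C : fieldType) (V : lmodType C) (f : C -> V) : Prop :=
  forall a c d : C, f (a * c + d) = a *: f c + f d.

Definition HomP (F : fieldType) (C : fieldType) (V : lmodType C)
    (chi : 'M[F]_2 -> C) (pi : 'M[F]_2 -> V -> V) (f : C -> V) : Prop :=
  is_Clinear f /\ forall b, inP b -> forall c : C, f (chi b * c) = pi b (f c).

Definition HomG (F : fieldType) (C : fieldType) (V : lmodType C)
    (psi : 'M[F]_2 -> C) (pi : 'M[F]_2 -> V -> V) (f : C -> V) : Prop :=
  is_Clinear f /\ forall g, inGL g -> forall c : C, f (psi g * c) = pi g (f c).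

Definition extends_char (F : fieldType) (C : fieldType)
    (psi : 'M[F]_2 -> C) (chiP : 'M[F]_2 -> C) : Prop :=
  forall b, inP b -> psi b = chiP b.

(* Main.v *)
Require Import Defs.
From HB Require Import structures.
From mathcomp Require Import all_boot all_order all_algebra.
From mathcomp Require Import ring zify.
From Stdlib Require Import FunctionalExtensionality.
Set Implicit Arguments. Unset Strict Implicit. Unset Printing Implicit Defensive.
Import Order.TTheory GRing.Theory Num.Theory.
Local Open Scope ring_scope.

Section M2.
Variable F : fieldType.

Definition mk2 (a b c d : F) : 'M[F]_2 :=
  \matrix_(i, j) if i == ord0 then (if j == ord0 then a else b)
                 else (if j == ord0 then c else d).

Lemma ord2P (i : 'I_2) : i = ord0 \/ i = ord_max.
Proof. case: i => [[|[|k]] Hk]; [left; exact: val_inj | right; exact: val_inj | by []]. Qed.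

Lemma mk2_00 a b c d : mk2 a b c d ord0 ord0 = a. Proof. by rewrite mxE. Qed.
Lemma mk2_01 a b c d : mk2 a b c d ord0 ord_max = b. Proof. by rewrite mxE. Qed.
Lemma mk2_10 a b c d : mk2 a b c d ord_max ord0 = c. Proof. by rewrite mxE. Qed.
Lemma mk2_11 a b c d : mk2 a b c d ord_max ord_max = d. Proof. by rewrite mxE. Qed.

Lemma mx2P (A : 'M[F]_2) :
  A = mk2 (A ord0 ord0) (A ord0 ord_max) (A ord_max ord0) (A ord_max ord_max).
Proof.
apply/matrixP => i j; rewrite mxE.
by case: (ord2P i) => ->; case: (ord2P j) => ->.
Qed.

Lemma mul2 a b c d a' b' c' d' :
  mk2 a b c d *m mk2 a' b' c' d' =
  mk2 (a*a'+b*c') (a*b'+b*d') (c*a'+d*c') (c*b'+d*d').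
Proof.
apply/matrixP => i j; rewrite !mxE !big_ord_recl big_ord0 !mxE /=.
have E1 : lift ord0 ord0 = ord_max :> 'I_2 by apply/val_inj.
rewrite ?E1 /=.
by case: (ord2P i) => ->; case: (ord2P j) => ->; rewrite /= addr0.
Qed.

Lemma det2 a b c d : \det (mk2 a b c d) = a * d - b * c.
Proof.
rewrite (expand_det_row _ ord0) !big_ord_recl big_ord0 /cofactor !det_mx11 !mxE /=.
have E1 : lift ord0 ord0 = ord_max :> 'I_2 by apply/val_inj.
rewrite ?E1 /=.
rewrite !expr0 !expr1 /=. ring.
Qed.

Lemma one2 : (1%:M : 'M[F]_2) = mk2 1 0 0 1.
Proof.
apply/matrixP => i j; rewrite !mxE.
by case: (ord2P i) => ->; case: (ord2P j) => ->.
Qed.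

Lemma unit2 a b c d : (mk2 a b c d \in unitmx) = (a * d - b * c != 0).
Proof. by rewrite unitmxE det2 unitfE. Qed.

Definition U2 c := mk2 1 c 0 1.
Definition L2 e := mk2 1 0 e 1.
Definition D2 s t := mk2 s 0 0 t.

Lemma unitU c : U2 c \in unitmx.
Proof. by rewrite unit2 !(mulr0, mul0r, mulr1, subr0) oner_neq0. Qed.
Lemma unitL e : L2 e \in unitmx.
Proof. by rewrite unit2 !(mulr0, mul0r, mulr1, subr0) oner_neq0. Qed.
Lemma unitD s t : s != 0 -> t != 0 -> D2 s t \in unitmx.
Proof. by move=> s0 t0; rewrite unit2 !(mulr0, mul0r, mulr1, subr0) mulf_neq0. Qed.
Lemma inP_U c : @inP F (U2 c).
Proof. by split; [exact: unitU | rewrite /U2 mk2_10]. Qed.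
Lemma inT_D s t : s != 0 -> t != 0 -> @inT F (D2 s t).
Proof. by move=> s0 t0; split; [exact: unitD | rewrite /D2 mk2_10 mk2_01]. Qed.
Lemma inP_T (b : 'M[F]_2) : inT b -> inP b.
Proof. by case=> [? [? ?]]. Qed.

Lemma diag_row (b : 'M[F]_2) :
  diag_mx (\row_i b i i) = D2 (b ord0 ord0) (b ord_max ord_max).
Proof.
apply/matrixP => i j; rewrite !mxE.
by case: (ord2P i) => ->; case: (ord2P j) => ->.
Qed.

Lemma inP_diag (b : 'M[F]_2) : inP b ->
  [/\ b ord0 ord0 != 0, b ord_max ord_max != 0 &
      \det b = b ord0 ord0 * b ord_max ord_max].
Proof.
case=> hu h10.
have dE : \det b = b ord0 ord0 * b ord_max ord_max.
  by rewrite {1}(mx2P b) det2 h10 mulr0 subr0.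
move: hu; rewrite unitmxE unitfE dE mulf_eq0 negb_or => /andP[h1 h2].
by split.
Qed.

End M2.
Section Val.
Variables (p : nat) (F : fieldType) (v : F -> int) (hF : is_nonarch_local_field p v).

Lemma vge_weak (m n : int) x : m <= n -> vge v n x -> vge v m x.
Proof. move=> hmn [->|h]; [by left| right; exact: le_trans h]. Qed.

Lemma vge_add n x y : vge v n x -> vge v n y -> vge v n (x + y).
Proof.
move=> [->|hx]; first by rewrite add0r.
move=> [->|hy]; first by rewrite addr0; right.
have [x0|x0] := eqVneq x 0; first by rewrite x0 add0r; right.
have [y0|y0] := eqVneq y 0; first by rewrite y0 addr0; right.
have [s0|s0] := eqVneq (x + y) 0; first by left.
right; apply: le_trans (nalf_vadd hF x0 y0 s0).
by rewrite le_min hx hy.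
Qed.

Lemma vge_mul n m x y : vge v n x -> vge v m y -> vge v (n + m) (x * y).
Proof.
move=> [->|hx]; first by rewrite mul0r; left.
move=> [->|hy]; first by rewrite mulr0; left.
have [x0|x0] := eqVneq x 0; first by rewrite x0 mul0r; left.
have [y0|y0] := eqVneq y 0; first by rewrite y0 mulr0; left.
by right; rewrite (nalf_vmul hF x0 y0) lerD.
Qed.

Lemma v1 : v 1 = 0.
Proof.
have h := nalf_vmul hF (oner_neq0 F) (oner_neq0 F).
rewrite mulr1 in h.
apply: (addrI (v 1)); rewrite addr0; exact (esym h).
Qed.

Lemma vopp x : x != 0 -> v (- x) = v x.
Proof.
move=> x0.
have m1 : (-1 : F) != 0 by rewrite oppr_eq0 oner_neq0.
have h := nalf_vmul hF m1 m1.
rewrite mulrNN mulr1 v1 in h.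
have h2 := nalf_vmul hF m1 x0.
rewrite mulN1r in h2. rewrite h2.
have -> : v (-1) = 0.
  move: h; set z := v (-1); move=> h. lia.
by rewrite add0r.
Qed.

Lemma vge_opp n x : vge v n x -> vge v n (- x).
Proof.
move=> [->|h]; first by rewrite oppr0; left.
have [x0|x0] := eqVneq x 0; first by rewrite x0 oppr0; left.
by right; rewrite vopp.
Qed.

Lemma vexp w k : w != 0 -> v (w ^+ k) = (v w) *+ k.
Proof.
move=> w0; elim: k => [|k IH]; first by rewrite expr0 mulr0n v1.
by rewrite exprS (nalf_vmul hF w0 (expf_neq0 k w0)) IH mulrS.
Qed.

Lemma scale_small (n : int) a : exists s : F, s != 0 /\ vge v n (a * s).
Proof.
have [a0|a0] := eqVneq a 0; first by exists 1; split; [exact: oner_neq0| left; rewrite a0 mul0r].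
case: (nalf_unif hF) => w [w0 vw].
exists (w ^+ `|n - v a|%N); split; first exact: expf_neq0.
right; rewrite (nalf_vmul hF a0 (expf_neq0 _ w0)) vexp // vw.
rewrite natz. lia.
Qed.

End Val.

Section Main.
Variables (F : fieldType) (C : fieldType) (V : lmodType C).
Variables (chi : 'M[F]_2 -> C) (pi : 'M[F]_2 -> V -> V).
Hypothesis chi_nz : forall t, inT t -> chi t != 0.
Hypothesis chi_mul : forall t t', inT t -> inT t' -> chi (t *m t') = chi t * chi t'.
Hypothesis pi_lin : forall g, inGL g -> forall (a : C) (x y : V), pi g (a *: x + y) = a *: pi g x + pi g y.
Hypothesis pi_one : forall x, pi 1%:M x = x.
Hypothesis pi_comp : forall g h, inGL g -> inGL h -> forall x, pi (g *m h) x = pi g (pi h x).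

Lemma inT1 : @inT F 1%:M.
Proof. by rewrite one2; apply: inT_D; exact: oner_neq0. Qed.

Lemma chi1 : chi 1%:M = 1.
Proof.
have h := chi_mul inT1 inT1; rewrite mul1mx in h.
have h0 := chi_nz inT1.
by apply: (mulfI h0); rewrite mulr1 -h.
Qed.

Lemma chiU c : charP chi (U2 c) = 1.
Proof. by rewrite /charP diag_row /U2 mk2_00 mk2_11 -chi1 one2. Qed.

Lemma pi0 g : inGL g -> pi g 0 = 0.
Proof.
move=> hg; have := pi_lin hg 1 0 0.
rewrite !scale1r addr0 => h.
by apply: (addrI (pi g 0)); rewrite addr0 -h.
Qed.

Lemma piZ g a x : inGL g -> pi g (a *: x) = a *: pi g x.
Proof. by move=> hg; have := pi_lin hg a x 0; rewrite !addr0 pi0 // addr0. Qed.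

Lemma chiD_mul s t s' t' : s != 0 -> t != 0 -> s' != 0 -> t' != 0 ->
  chi (D2 (s * s') (t * t')) = chi (D2 s t) * chi (D2 s' t').
Proof.
move=> s0 t0 s0' t0'; rewrite -chi_mul; try exact: inT_D.
by rewrite /D2 mul2 !(mulr0, mul0r, addr0, add0r).
Qed.

Lemma dec (g : 'M[F]_2) : inGL g ->
  exists c0 e B, inP B /\ g = U2 c0 *m (L2 e *m B).
Proof.
rewrite /inGL (mx2P g) unit2.
set a := g ord0 ord0; set b := g ord0 ord_max; set c := g ord_max ord0;
set d := g ord_max ord_max => hdet.
pose c0 : F := if a == 0 then 1 else 0.
have ha : a - c0 * c != 0.
  rewrite /c0; have [a0|a0] := eqVneq a 0; last by rewrite mul0r subr0.
  rewrite mul1r a0 sub0r oppr_eq0; apply: contraNneq hdet => ->.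
  by rewrite a0 !mulr0 ?mul0r subrr.
set a' := a - c0 * c in ha *.
exists c0, (c / a'), (mk2 a' (b - c0 * d) 0 (d - c * (b - c0 * d) / a')).
split.
  split; last by rewrite mk2_10.
  rewrite unit2 mulr0 subr0.
  have -> : a' * (d - c * (b - c0 * d) / a') = a * d - b * c.
    rewrite /a'; field; done.
  done.
rewrite /U2 /L2 !mul2; congr mk2; rewrite /a'; field; done.
Qed.

Section Vec.
Variables (p : nat) (v : F -> int) (hF : is_nonarch_local_field p v).
Variable y : V.
Hypothesis HP : forall b, inP b -> pi b y = charP chi b *: y.
Variable n : nat.
Hypothesis Hsm : forall g, inK v n.+1 g -> pi g y = y.

Lemma fixU c : pi (U2 c) y = y.
Proof. by rewrite HP ?chiU ?scale1r //; exact: inP_U. Qed.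

Lemma fixL e : pi (L2 e) y = y.
Proof.
have [s [s0 hs]] := scale_small hF n.+1 e.
have si0 : s^-1 != 0 by rewrite invr_eq0.
have E : L2 e = D2 s 1 *m (L2 (e * s) *m D2 s^-1 1).
  rewrite /D2 /L2 !mul2; congr mk2; field; done.
rewrite E pi_comp; last 2 first.
- exact: unitD (oner_neq0 _).
- rewrite /inGL unitmx_mul unitL; exact: unitD (oner_neq0 _).
rewrite pi_comp; [| exact: unitL | exact: unitD (oner_neq0 _)].
rewrite HP; last by apply: inP_T; exact: inT_D (oner_neq0 _).
rewrite piZ; last exact: unitL.
rewrite Hsm; last first.
  split; first exact: unitL.
  move=> i j; rewrite one2 /L2.
  by case: (ord2P i) => ->; case: (ord2P j) => ->;
    rewrite ?mk2_00 ?mk2_01 ?mk2_10 ?mk2_11 ?subrr ?subr0; try by left.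
rewrite piZ; last exact: unitD (oner_neq0 _).
rewrite HP; last by apply: inP_T; exact: inT_D (oner_neq0 _).
rewrite scalerA /charP !diag_row /D2 !mk2_00 !mk2_11 -chiD_mul ?oner_neq0 //.
by rewrite mulVf // mulr1 /D2 -one2 chi1 scale1r.
Qed.

Lemma charPD s t : charP chi (D2 s t) = chi (D2 s t).
Proof. by rewrite /charP diag_row /D2 mk2_00 mk2_11. Qed.

Lemma inGL_ULU c e c' : @inGL F (U2 c *m (L2 e *m U2 c')).
Proof. by rewrite /inGL !unitmx_mul unitL !unitU. Qed.

Lemma fixULU c e c' : pi (U2 c *m (L2 e *m U2 c')) y = y.
Proof.
rewrite pi_comp; [|exact: unitU| by rewrite /inGL unitmx_mul unitL unitU].
by rewrite pi_comp /inGL ?unitL ?unitU // fixU fixL fixU.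
Qed.

Lemma swapD (hy0 : y != 0) s t : s != 0 -> t != 0 -> chi (D2 t s) = chi (D2 s t).
Proof.
move=> s0 t0.
have E : D2 t s = (U2 1 *m (L2 (-1) *m U2 1)) *m (D2 s t *m (U2 (-1) *m (L2 1 *m U2 (-1)))).
  by rewrite /D2 /U2 /L2 !mul2; congr mk2; ring.
have h2 : pi (D2 t s) y = chi (D2 s t) *: y.
  rewrite E pi_comp; [|exact: inGL_ULU| by rewrite /inGL unitmx_mul unitD //; exact: inGL_ULU].
  rewrite (@pi_comp (D2 s t)); [|exact: (unitD s0 t0)| exact: inGL_ULU].
  rewrite fixULU.
  rewrite HP; last exact: inP_T (inT_D s0 t0).
  rewrite piZ; last exact: inGL_ULU.
  by rewrite (fixULU 1 (-1) 1) charPD.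
have h1 := HP (inP_T (inT_D t0 s0)).
rewrite h2 charPD in h1.
move/eqP: h1; rewrite eq_sym -subr_eq0 -scalerBl scaler_eq0 (negbTE hy0) orbF subr_eq0.
by move/eqP.
Qed.

Hypothesis KF : forall s, s != 0 -> chi (D2 1 s) = chi (D2 s 1).

Lemma charP_det B : inP B -> charP chi B = chi (D2 (\det B) 1).
Proof.
move=> hB; have [h0 h1 hd] := inP_diag hB.
rewrite /charP diag_row hd.
have -> : D2 (B ord0 ord0) (B ord_max ord_max) = D2 (B ord0 ord0 * 1) (1 * B ord_max ord_max).
  by rewrite mulr1 mul1r.
rewrite chiD_mul ?oner_neq0 // KF // -chiD_mul ?oner_neq0 //.
by rewrite mulr1.
Qed.

Lemma allfix g : inGL g -> pi g y = chi (D2 (\det g) 1) *: y.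
Proof.
move=> hg; have [c0 [e [B [hB ->]]]] := dec hg.
have hBu : inGL B by case: hB.
rewrite pi_comp; [|exact: unitU| by rewrite /inGL unitmx_mul unitL].
rewrite pi_comp //; last exact: unitL.
rewrite HP // piZ; last exact: unitL.
rewrite fixL piZ; last exact: unitU.
rewrite fixU.
rewrite charP_det // !det_mulmx /U2 /L2 !det2.
by rewrite !(mulr1, mulr0, mul0r, subr0, mul1r).
Qed.

End Vec.
End Main.

Lemma detK p (F : fieldType) (v : F -> int) (hF : is_nonarch_local_field p v) n (g : 'M[F]_2) :
  inK v n.+1 g -> vge v n.+1 (\det g - 1).
Proof.
case=> _ hk.
have h00 := hk ord0 ord0; have h01 := hk ord0 ord_max.
have h10 := hk ord_max ord0; have h11 := hk ord_max ord_max.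
rewrite one2 ?mk2_00 ?mk2_01 ?mk2_10 ?mk2_11 ?subr0 in h00 h01 h10 h11.
rewrite (mx2P g) det2.
set a := g ord0 ord0 in h00 *; set b := g ord0 ord_max in h01 *;
set c := g ord_max ord0 in h10 *; set d := g ord_max ord_max in h11 *.
have -> : a * d - b * c - 1 = (a - 1) + (d - 1) + (a - 1) * (d - 1) + - (b * c) by ring.
have hw : forall x y, vge v n.+1 x -> vge v n.+1 y -> vge v n.+1 (x * y).
  move=> x y hx hy; apply: (vge_weak (n := n.+1%:Z + n.+1%:Z)); last exact: (vge_mul hF hx hy).
  lia.
apply: (vge_add hF); last by apply: (vge_opp hF); apply: hw.
apply: (vge_add hF); last exact: hw.
exact: (vge_add hF).
Qed.

Lemma flin (C : fieldType) (V : lmodType C) (f : C -> V) : is_Clinear f -> forall c, f c = c *: f 1.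
Proof.
move=> hl.
have f0 : f 0 = 0.
  have := hl 1 0 0; rewrite mulr0 addr0 scale1r => h.
  by apply: (addrI (f 0)); rewrite addr0 -h.
by move=> c; have := hl c 1 0; rewrite mulr1 addr0 f0 addr0.
Qed.

Theorem lemma5p1 (p : nat) (F : fieldType) (v : F -> int)
    (C : closedFieldType) (V : lmodType C)
    (hF : is_nonarch_local_field p v) (hC : is_Fpbar C p)
    (chi : 'M[F]_2 -> C) (hchi : is_smooth_char_T v chi)
    (pi : 'M[F]_2 -> V -> V) (hpi : is_smooth_rep v pi) :
  (exists f : C -> V, HomP (charP chi) pi f /\ f <> (fun _ => 0)) ->
  exists psi : 'M[F]_2 -> C,
    [/\ is_smooth_char_G v psi,
        extends_char psi (charP chi),
        (forall psi' : 'M[F]_2 -> C, is_smooth_char_G v psi' ->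
           extends_char psi' (charP chi) -> forall g, inGL g -> psi' g = psi g)
      & (forall f : C -> V, HomP (charP chi) pi f <-> HomG psi pi f)].
Proof.
case=> f [[hfl hf] hf0].
case: hchi => [chi_nz [chi_mul [nchi hnchi]]].
case: hpi => [[pi_lin [pi_one pi_comp]] hsm].
have HPof : forall f', HomP (charP chi) pi f' ->
    forall b, inP b -> pi b (f' 1) = charP chi b *: f' 1.
  move=> f' [hl hc] b hb; rewrite -(flin hl) -[charP chi b]mulr1; by rewrite hc.
have HP := HPof f (conj hfl hf).
have y0 : f 1 != 0.
  apply/negP => /eqP h; apply: hf0; apply: FunctionalExtensionality.functional_extensionality => c.
  by rewrite (flin hfl) h scaler0.
have [n Hn] := hsm (f 1).
have KF : forall s, s != 0 -> chi (D2 1 s) = chi (D2 s 1).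
  move=> s s0.
  exact: (swapD chi_nz chi_mul pi_lin pi_comp hF HP Hn y0 s0 (oner_neq0 F)).
pose psi (g : 'M[F]_2) := chi (D2 (\det g) 1).
have detnz : forall g : 'M[F]_2, inGL g -> \det g != 0.
  by move=> g; rewrite /inGL unitmxE unitfE.
have psiB : forall B, inP B -> psi B = charP chi B.
  by move=> B hB; rewrite (charP_det chi_mul KF hB).
exists psi; split.
- split; [|split].
  + by move=> g hg; apply: chi_nz; apply: inT_D; [exact: detnz | exact: oner_neq0].
  + move=> g h hg hh.
    have := chiD_mul chi_mul (detnz g hg) (oner_neq0 F) (detnz h hh) (oner_neq0 F).
    by rewrite mulr1 /psi det_mulmx => <-.
  + exists nchi => g hk.
    have hg : inGL g by case: hk.
    apply: hnchi; first by apply: inT_D; [exact: detnz | exact: oner_neq0].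
    split; first by apply: unitD; [exact: detnz | exact: oner_neq0].
    move=> i j; rewrite one2 /D2.
    case: (ord2P i) => ->; case: (ord2P j) => ->;
      rewrite ?mk2_00 ?mk2_01 ?mk2_10 ?mk2_11 ?subrr ?subr0; try by left.
    exact: (detK hF hk).
- by move=> b hb; rewrite psiB.
- move=> psi' [nz' [mul' _]] ext' g hg.
  have [c0 [e [B [hB ->]]]] := dec hg.
  have hBu : inGL B by case: hB.
  have hU : forall c, psi' (U2 c) = 1.
    by move=> c; rewrite ext' ?chiU //; exact: inP_U.
  have hL : psi' (L2 e) = 1.
    have E : L2 e = mk2 0 1 (-1) 0 *m (U2 (-e) *m mk2 0 (-1) 1 0).
      by rewrite /U2 /L2 !mul2; congr mk2; ring.
    have uW : inGL (mk2 0 1 (-1) 0 : 'M[F]_2).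
      by rewrite /inGL unit2 !(mulr0, mul0r, mulr1, mul1r) sub0r opprK oner_neq0.
    have uWi : inGL (mk2 0 (-1) 1 0 : 'M[F]_2).
      by rewrite /inGL unit2 !(mulr0, mul0r, mulr1, mulN1r) sub0r ?opprK ?oppr_eq0 oner_neq0.
    rewrite E mul'; [| exact: uW | by rewrite /inGL unitmx_mul unitU].
    rewrite mul' ?hU ?mul1r; [| exact: unitU | exact: uWi].
    rewrite -mul' //.
    have -> : mk2 0 1 (-1) 0 *m mk2 0 (-1) 1 0 = U2 (0 : F).
      by rewrite /U2 !mul2; congr mk2; ring.
    exact: hU.
  rewrite mul'; [| exact: unitU | by rewrite /inGL unitmx_mul unitL].
  rewrite mul' ?hU ?hL ?mul1r //; last exact: unitL.
  rewrite ext' // -psiB // /psi !det_mulmx /U2 /L2 !det2.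
  by rewrite !(mulr1, mulr0, mul0r, subr0, mul1r).
- move=> f'; split.
  + move=> hP; have [hl hc] := hP; split => // g hg c.
    have HP' := HPof f' hP.
    have [n' Hn'] := hsm (f' 1).
    rewrite (flin hl) (flin hl c) piZ // (allfix chi_nz chi_mul pi_lin pi_comp hF HP' Hn' KF hg).
    by rewrite scalerA mulrC.
  + case=> hl hc; split => // b hb c.
    rewrite -psiB //; apply: hc; by case: hb.
Qed.
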